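(* Let $A,B\in\mathcal{M}_{n\times n}$ with $A\neq 0$. Then the following are equivalent: (i) $A\parallel B$ in the operator norm $\|\cdot\|_\infty$; (ii) there exist unit vectors $x,y\in\mathcal{M}_{n\times 1}$ such that $\|A\|_\infty = x^*Ay$ and $|x^*By|=\|B\|_\infty$; (iii) for any matrix $U\in\mathcal{M}_{n\times k}$ whose orthonormal columns form a basis of the eigenspace of $AA^*$ corresponding to its largest eigenvalue, with $V=\frac{1}{\|A\|_\infty}A^*U\in\mathcal{M}_{n\times k}$, one has $-\|B\|_\infty\in W(\lambda U^*BV)$ for some $\lambda\in\mathbb{T}$.
   Context: $\mathcal{M}_{m\times n}$ denotes complex $m\times n$ matrices; $\|A\|_\infty$ is the largest singular value of $A$ (operator norm). $\mathbb{T}=\{\alpha\in\mathbb{C}:|\alpha|=1\}$. $A\parallel B$ in a norm $\|\cdot\|$ means $\|A+\lambda B\|=\|A\|+\|B\|$ for some $\lambda\in\mathbb{T}$. For a square matrix $T\in\mathcal{M}_{k\times k}$, $W(T)=\{\zeta^*T\zeta:\zeta\in\mathcal{M}_{k\times 1},\ \|\zeta\|=1\}$ is its numerical range. *)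

(* Defs.v *)
From HB Require Import structures.
From mathcomp Require Import all_boot all_order all_algebra.
From mathcomp Require Import complex.
From mathcomp Require Import reals classical_sets.
Set Implicit Arguments. Unset Strict Implicit. Unset Printing Implicit Defensive.
Import Order.TTheory GRing.Theory Num.Theory.
Local Open Scope ring_scope.
Local Open Scope classical_set_scope.

Definition ctr (R : realType) m n (A : 'M[R[i]]_(m, n)) : 'M[R[i]]_(n, m) :=
  map_mx (@conjc R) A^T.

Definition vnorm (R : realType) n (x : 'cV[R[i]]_n) : R :=
  Num.sqrt (\sum_i (ComplexField.Normc.normc (x i 0)) ^+ 2).

Definition opnorm (R : realType) m n (A : 'M[R[i]]_(m, n)) : R :=
  sup [set vnorm (A *m x) | x in [set x : 'cV[R[i]]_n | vnorm x = 1]].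

Definition sesq (R : realType) m n (x : 'cV[R[i]]_m) (T : 'M[R[i]]_(m, n))
  (y : 'cV[R[i]]_n) : R[i] :=
  (ctr x *m T *m y) 0 0.

Definition opnorm_parallel (R : realType) m n (A B : 'M[R[i]]_(m, n)) : Prop :=
  exists lam : R[i], ComplexField.Normc.normc lam = 1 /\ opnorm (A + lam *: B) = opnorm A + opnorm B.

Definition numerical_range (R : realType) k (T : 'M[R[i]]_k) : set R[i] :=
  [set z | exists zeta : 'cV[R[i]]_k, vnorm zeta = 1 /\ sesq zeta T zeta = z].

(* eigenvalues (column-vector convention) *)
Definition is_eigenvalue (R : realType) n (M : 'M[R[i]]_n) (mu : R[i]) : Prop :=
  exists x : 'cV[R[i]]_n, x != 0 /\ M *m x = mu *: x.

Definition is_largest_eigenvalue (R : realType) n (M : 'M[R[i]]_n) (mu : R[i]) : Prop :=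
  is_eigenvalue M mu /\ forall nu, is_eigenvalue M nu -> nu <= mu.

(* Main.v *)
Require Import Defs.
From HB Require Import structures.
From mathcomp Require Import all_boot all_order all_algebra.
From mathcomp Require Import complex.
From mathcomp Require Import reals classical_sets.
From mathcomp Require Import sesquilinear spectral ring lra.
Import Order.TTheory GRing.Theory Num.Theory Num.Def.
Set Implicit Arguments. Unset Strict Implicit. Unset Printing Implicit Defensive.
Local Open Scope ring_scope.

Section Basics.
Variable R : realType.
Local Notation C := R[i].
Local Notation normc := ComplexField.Normc.normc.

Lemma conjcE (x : C) : conjc x = x^*.
Proof.
have [->|x0] := eqVneq x 0; first by rewrite conjc0 conjC0.
apply: (mulfI x0); by rewrite -sqr_normc normCK.
Qed.

Lemma normcC (x : C) : ((normc x)%:C)%C = `|x|.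
Proof. by rewrite normc_def; case: x. Qed.

Lemma ctrE m n (A : 'M[C]_(m, n)) : ctr A = map_mx conjC A^T.
Proof. by apply/matrixP => i j; rewrite !mxE conjcE. Qed.

Lemma ctrM m n p (A : 'M[C]_(m, n)) (B : 'M[C]_(n, p)) :
  ctr (A *m B) = ctr B *m ctr A.
Proof. by rewrite !ctrE trmx_mul map_mxM. Qed.

Lemma ctrK m n (A : 'M[C]_(m, n)) : ctr (ctr A) = A.
Proof. by apply/matrixP => i j; rewrite !ctrE !mxE conjCK. Qed.

Lemma ctrD m n (A B : 'M[C]_(m, n)) : ctr (A + B) = ctr A + ctr B.
Proof. by rewrite !ctrE linearD /= map_mxD. Qed.

Lemma ctrZ m n a (A : 'M[C]_(m, n)) : ctr (a *: A) = a^* *: ctr A.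
Proof. by rewrite !ctrE linearZ /= map_mxZ. Qed.

Lemma ctrN m n (A : 'M[C]_(m, n)) : ctr (- A) = - ctr A.
Proof. by rewrite -scaleN1r ctrZ rmorphN1 scaleN1r. Qed.

Lemma ctr1 n : ctr (1%:M : 'M[C]_n) = 1%:M.
Proof. by rewrite ctrE trmx1 map_mx1. Qed.

Definition dot n (x y : 'cV[C]_n) : C := (ctr x *m y) 0 0.

Lemma dotE n (x y : 'cV[C]_n) : dot x y = \sum_i (x i 0)^* * y i 0.
Proof. by rewrite /dot mxE; apply: eq_bigr => i _; rewrite ctrE !mxE. Qed.

Lemma dotC n (x y : 'cV[C]_n) : dot y x = (dot x y)^*.
Proof.
rewrite !dotE rmorph_sum; apply: eq_bigr => i _.
by rewrite rmorphM /= conjCK mulrC.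
Qed.

Lemma dotDr n (x y z : 'cV[C]_n) : dot x (y + z) = dot x y + dot x z.
Proof. by rewrite /dot mulmxDr mxE. Qed.

Lemma dotZr n a (x y : 'cV[C]_n) : dot x (a *: y) = a * dot x y.
Proof. by rewrite /dot -scalemxAr mxE. Qed.

Lemma dotNr n (x y : 'cV[C]_n) : dot x (- y) = - dot x y.
Proof. by rewrite -scaleN1r dotZr mulN1r. Qed.

Lemma dotBr n (x y z : 'cV[C]_n) : dot x (y - z) = dot x y - dot x z.
Proof. by rewrite dotDr dotNr. Qed.

Lemma dotDl n (x y z : 'cV[C]_n) : dot (y + z) x = dot y x + dot z x.
Proof. by rewrite /dot ctrD mulmxDl mxE. Qed.

Lemma dotZl n a (x y : 'cV[C]_n) : dot (a *: y) x = a^* * dot y x.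
Proof. by rewrite /dot ctrZ -scalemxAl mxE. Qed.

Lemma dotNl n (x y : 'cV[C]_n) : dot (- y) x = - dot y x.
Proof. by rewrite -scaleN1r dotZl rmorphN1 mulN1r. Qed.

Lemma dotBl n (x y z : 'cV[C]_n) : dot (y - z) x = dot y x - dot z x.
Proof. by rewrite dotDl dotNl. Qed.

Lemma dotMr m n (M : 'M[C]_(m, n)) x y : dot x (M *m y) = dot (ctr M *m x) y.
Proof. by rewrite /dot ctrM ctrK mulmxA. Qed.

Lemma sesqE m n (x : 'cV[C]_m) (T : 'M[C]_(m, n)) y : sesq x T y = dot x (T *m y).
Proof. by rewrite /sesq /dot mulmxA. Qed.

Lemma vnorm_ge0 n (x : 'cV[C]_n) : 0 <= vnorm x.
Proof. exact: sqrtr_ge0. Qed.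

Lemma dot_self n (x : 'cV[C]_n) : dot x x = ((vnorm x ^+ 2)%:C)%C.
Proof.
rewrite /vnorm sqr_sqrtr; last by apply: sumr_ge0 => i _; apply: sqr_ge0.
rewrite rmorph_sum dotE; apply: eq_bigr => i _.
by rewrite rmorphXn /= normcC normCKC.
Qed.

Lemma vnorm_sq_eq n (x : 'cV[C]_n) r : 0 <= r -> dot x x = ((r ^+ 2)%:C)%C -> vnorm x = r.
Proof.
move=> r0; rewrite dot_self => /complexI /eqP.
by rewrite eqrXn2 ?vnorm_ge0 // => /eqP.
Qed.

Lemma vnorm_eq0 n (x : 'cV[C]_n) : vnorm x = 0 -> x = 0.
Proof.
move=> x0; have := dot_self x; rewrite x0 expr0n /= mulr0n dotE => /eqP.
rewrite psumr_eq0 => [/allP H|i _]; last by rewrite -normCKC exprn_ge0.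
apply/matrixP => i j; rewrite ord1 mxE.
by have /(_ i (mem_index_enum i))/implyP/(_ isT) := H; rewrite -normCKC sqrf_eq0 normr_eq0 => /eqP.
Qed.

Lemma normc_ge0 (a : C) : 0 <= normc a.
Proof. by rewrite -lecR normcC normr_ge0. Qed.

Lemma vnormZ n a (x : 'cV[C]_n) : vnorm (a *: x) = normc a * vnorm x.
Proof.
apply: vnorm_sq_eq; first by rewrite mulr_ge0 ?vnorm_ge0 ?normc_ge0.
by rewrite dotZl dotZr dot_self mulrA -normCKC exprMn -normcC [RHS]rmorphM /= !rmorphXn.
Qed.


Lemma conjC_realC (r : R) : (r%:C%C)^* = r%:C%C.
Proof. by rewrite -conjcE conjc_real. Qed.

Lemma Re_le_normc (w : C) : complex.Re w <= normc w.
Proof.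
apply: (le_trans (real_ler_norm (num_real (complex.Re w)))).
by rewrite -lecR normcC; apply: le_trans (normc_ge_Re w); rewrite lecR.
Qed.

Lemma ReC (w : C) : (w + w^*) = ((2 * complex.Re w)%:C)%C.
Proof.
by rewrite rmorphM /= complexRe ReE (rmorph_nat _ 2) mulrC divfK // pnatr_eq0.
Qed.

Lemma dotDD n (u v : 'cV[C]_n) :
  vnorm (u + v) ^+ 2 = vnorm u ^+ 2 + vnorm v ^+ 2 + 2 * complex.Re (dot u v).
Proof.
apply: complexI; rewrite -dot_self !rmorphD /= -!dot_self -ReC.
rewrite dotDl !dotDr (dotC u v); ring.
Qed.

Lemma CS n (x y : 'cV[C]_n) : normc (dot x y) <= vnorm x * vnorm y.
Proof.
have [y0|y0] := eqVneq (vnorm y) 0.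
  by rewrite y0 (vnorm_eq0 y0) /dot mulmx0 mxE mulr0 -lecR normcC normr0.
pose p := ((vnorm y ^+ 2)%:C)%C; pose q := dot y x.
pose z := p *: x - q *: y.
have E : dot z z = p * (p * dot x x - q * q^*).
  rewrite /z dotBl !dotBr !dotZl !dotZr (dotC y x) -/q !dot_self -/p conjC_realC.
  rewrite /p; ring.
have p0 : 0 < p by rewrite ltcR exprn_gt0 // lt_def y0 vnorm_ge0.
have : 0 <= dot z z by rewrite dot_self lecR sqr_ge0.
rewrite E pmulr_rge0 // subr_ge0 -normCK -normcC dot_self -rmorphXn -!rmorphM lecR.
have -> : dot x y = q^* by rewrite /q dotC.
rewrite -conjcE -(ler_sqr (normc_ge0 _)) ?nnegrE ?mulr_ge0 ?vnorm_ge0 //.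
suff -> : normc (conjc q) = normc q by rewrite exprMn mulrC.
by clearbody z; case: q {E}; move=> a b /=; rewrite sqrrN.
Qed.

Lemma vnormD n (u v : 'cV[C]_n) : vnorm (u + v) <= vnorm u + vnorm v.
Proof.
rewrite -(ler_sqr (vnorm_ge0 _)) ?nnegrE ?addr_ge0 ?vnorm_ge0 // dotDD sqrrD.
have := le_trans (Re_le_normc (dot u v)) (CS u v).
set a := complex.Re _; move=> h; nra.
Qed.

End Basics.

Section Opnorm.
Variable R : realType.
Local Open Scope classical_set_scope.
Local Notation C := R[i].
Local Notation normc := ComplexField.Normc.normc.
Variables (n : nat) (n0 : (0 < n)%N) (M : 'M[C]_n).

Lemma exists_max (f : 'I_n -> R) : exists j, forall i, f i <= f j.
Proof.
have j0 : 'I_n := Ordinal n0.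
case: (@arg_maxP _ _ 'I_n j0 xpredT f isT) => j _ H.
by exists j => i; apply: H.
Qed.

Lemma dot_delta (j : 'I_n) : dot (delta_mx j 0 : 'cV[C]_n) (delta_mx j 0) = 1.
Proof.
rewrite dotE (bigD1 j) //= big1 ?addr0 => [|i ij]; first by rewrite !mxE !eqxx /= conjC1 mulr1.
by rewrite !mxE (negPf ij) /= mulr0.
Qed.

Lemma opnorm_spec : exists y, [/\ vnorm y = 1,
  ctr M *m M *m y = ((vnorm (M *m y) ^+ 2)%:C)%C *: y &
  forall x, vnorm (M *m x) ^+ 2 <= vnorm (M *m y) ^+ 2 * vnorm x ^+ 2].
Proof.
pose G := ctr M *m M.
have GG : ctr G = G by rewrite /G ctrM ctrK.
have Gn : G \is normalmx.
  by apply/normalmxP; rewrite -ctrE GG.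
have := @orthomx_spectralP _ _ G; rewrite Gn => /(_ isT) PE.
set P := spectralmx G in PE; set d := spectral_diag G in PE.
have Pu : P \is unitarymx by apply: spectral_unitarymx.
pose Q := ctr P.
have QQ : ctr Q *m Q = 1%:M by rewrite /Q ctrK ctrE; apply/unitarymxP.
have QQ' : Q *m ctr Q = 1%:M by apply: mulmx1C.
have GE : G = Q *m diag_mx d *m ctr Q.
  by rewrite PE invmx_unitary // /Q ctrK ctrE.
pose e (j : 'I_n) : 'cV[C]_n := delta_mx j 0.
pose z j := Q *m e j.
have De j : diag_mx d *m e j = d 0 j *: e j.
  apply/matrixP => i k; rewrite mul_diag_mx !mxE.
  by case: eqP => [->|_] //=; rewrite !mulr0.
have Gz j : G *m z j = d 0 j *: z j.
  by rewrite GE /z -!mulmxA (mulmxA (ctr Q)) QQ mul1mx De scalemxAr.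
have zz j : dot (z j) (z j) = 1.
  by rewrite /z dotMr mulmxA QQ mul1mx dot_delta.
have dG x : dot x (G *m x) = ((vnorm (M *m x) ^+ 2)%:C)%C.
  by rewrite /G -mulmxA dotMr ctrK dot_self.
pose r j := vnorm (M *m z j) ^+ 2.
have dr j : d 0 j = (r j)%:C%C.
  by rewrite /r -dG Gz dotZr zz mulr1.
have [jm Hjm] := exists_max r.
exists (z jm); split.
- by apply: vnorm_sq_eq => //; rewrite zz expr1n.
- by rewrite -/G Gz dr.
move=> x; rewrite -/(r jm) -lecR -dG rmorphM /= -(dot_self x).
rewrite GE -!mulmxA dotMr.
set w := ctr Q *m x.
have -> : dot x x = dot w w by rewrite /w dotMr ctrK mulmxA QQ' mul1mx.
clearbody w; rewrite !dotE mulr_sumr; apply: ler_sum => i _.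
rewrite mul_diag_mx mxE dr mulrCA ler_wpM2r //.
  by rewrite -normCKC exprn_ge0.
by rewrite lecR.
Qed.

Lemma opnormP : exists y, [/\ vnorm y = 1, vnorm (M *m y) = opnorm M,
  ctr M *m M *m y = ((opnorm M ^+ 2)%:C)%C *: y &
  forall x, vnorm (M *m x) <= opnorm M * vnorm x].
Proof.
have [y [y1 Gy Hy]] := opnorm_spec.
set s := vnorm (M *m y).
have s0 : 0 <= s by apply: vnorm_ge0.
have Hx x : vnorm (M *m x) <= s * vnorm x.
  by rewrite -(ler_sqr (vnorm_ge0 _)) ?nnegrE ?mulr_ge0 ?vnorm_ge0 // exprMn.
have ub : ubound [set vnorm (M *m x) | x in [set x : 'cV[C]_n | vnorm x = 1]] s.
  by move=> _ [x /= x1 <-]; have := Hx x; rewrite x1 mulr1.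
have ne : [set vnorm (M *m x) | x in [set x : 'cV[C]_n | vnorm x = 1]] s.
  by exists y.
have E : opnorm M = s.
  apply: le_anti; rewrite ge_sup //=; last by exists s.
  by apply: ub_le_sup => //; exists s.
exists y; split => //; by rewrite E.
Qed.

End Opnorm.

Section Onb.
Variable R : realType.
Local Notation C := R[i].
Local Notation normc := ComplexField.Normc.normc.

Lemma exists_onb n (M : 'M[C]_n) (mu : C) : exists k (U : 'M[C]_(n, k)),
  ctr U *m U = 1%:M /\
  forall x : 'cV[C]_n, M *m x = mu *: x <-> exists c : 'cV[C]_k, x = U *m c.
Proof.
pose E := eigenspace M^T mu.
pose Q := schmidt (row_base E).
have Qu : Q *m map_mx conjC Q^T = 1%:M.
  by apply/unitarymxP/schmidt_unitarymx/rank_leq_col.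
have QE : (Q :=: E)%MS.
  exact: eqmx_trans (eqmx_schmidt_free (row_base_free E)) (eq_row_base E).
exists (\rank E), Q^T; split.
  have := congr1 trmx Qu; rewrite trmx_mul trmx1 map_trmx trmxK => <-.
  by rewrite ctrE trmxK.
move=> x; split.
  move=> /(congr1 trmx); rewrite trmx_mul linearZ /= => /eigenspaceP.
  rewrite -QE => /submxP [D HD]; exists D^T.
  by rewrite -[x]trmxK HD trmx_mul.
move=> [c ->]; apply: trmx_inj; rewrite trmx_mul linearZ /=.
apply/eigenspaceP; rewrite -QE trmx_mul trmxK.
exact: submxMl.
Qed.

Lemma normcR (r : R) : normc (r%:C%C) = `|r|.
Proof. by rewrite /= expr0n addr0 /= sqrtr_sqr. Qed.

Lemma normc_real (r : R) : 0 <= r -> normc (r%:C%C) = r.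
Proof. by move=> r0; rewrite normcR ger0_norm. Qed.

Lemma normc_eqC (z : C) r : `|z| = r%:C%C -> normc z = r.
Proof. by rewrite -normcC => /complexI. Qed.

Lemma mx0P m n (M : 'M[C]_(m, n)) : (forall x : 'cV[C]_n, M *m x = 0) -> M = 0.
Proof.
move=> H; apply/matrixP => i j.
by have := H (delta_mx j 0); rewrite -colE => /matrixP /(_ i 0); rewrite !mxE.
Qed.

Lemma eq_case n (u z : 'cV[C]_n) s : 0 <= s -> vnorm u <= s -> vnorm z = 1 ->
  dot u z = s%:C%C -> u = s%:C%C *: z.
Proof.
move=> s0 us z1 uz; apply/eqP; rewrite -subr_eq0; apply/eqP/vnorm_eq0.
have -> : u - s%:C%C *: z = u + (- s)%:C%C *: z by rewrite rmorphN scaleNr.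
have h := dotDD u ((- s)%:C%C *: z).
rewrite dotZr uz -rmorphM /= vnormZ z1 mulr1 normcR normrN ger0_norm // in h.
have u0 := vnorm_ge0 u.
have v0 := vnorm_ge0 (u + (- s)%:C%C *: z).
move: h v0; set v := vnorm _ => h v0.
have : v ^+ 2 <= 0 by nra.
by move=> h2; apply/eqP; rewrite -sqrf_eq0 eq_le h2 sqr_ge0.
Qed.

End Onb.

Section Main.
Variable R : realType.
Local Notation C := R[i].
Local Notation normc := ComplexField.Normc.normc.
Variables (n : nat) (A B : 'M[C]_n) (HA : A != 0).

Lemma n_gt0 : (0 < n)%N.
Proof. by case: n A HA => // A0; rewrite (flatmx0 A0) eqxx. Qed.

Lemma opnorm_le (M : 'M[C]_n) x : vnorm (M *m x) <= opnorm M * vnorm x.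
Proof. by have [y [_ _ _]] := opnormP n_gt0 M; apply. Qed.

Lemma opnorm_ge0 (M : 'M[C]_n) : 0 <= opnorm M.
Proof. by have [y [_ <- _ _]] := opnormP n_gt0 M; apply: vnorm_ge0. Qed.

Local Notation s := (opnorm A).
Local Notation b := (opnorm B).

Lemma s_gt0 : 0 < s.
Proof.
rewrite lt_def opnorm_ge0 andbT; apply: contraNneq HA => s0.
apply/eqP/mx0P => x; apply: vnorm_eq0; apply/le_anti.
by rewrite vnorm_ge0 andbT; have := opnorm_le A x; rewrite s0 mul0r.
Qed.

Lemma ii_to_i : (exists x y : 'cV[C]_n, vnorm x = 1 /\ vnorm y = 1 /\
      sesq x A y = s%:C%C /\ normc (sesq x B y) = b) -> opnorm_parallel A B.
Proof.
move=> [x [y [x1 [y1 [xAy xBy]]]]].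
set w := sesq x B y in xBy.
pose lam := if w == 0 then 1 else b%:C%C / w.
have lamw : lam * w = b%:C%C.
  rewrite /lam; case: eqP => [w0|/eqP w0]; last by rewrite divfK.
  by rewrite -xBy w0 mulr0 /= expr0n addr0 sqrtr0.
have lam1 : normc lam = 1.
  rewrite /lam; case: eqP => [_|/eqP w0]; first exact: ComplexField.Normc.normc1.
  rewrite ComplexField.Normc.normcM ComplexField.Normc.normcV xBy normc_real ?opnorm_ge0 //.
  by rewrite divff // -xBy; apply: contra w0 => /eqP /ComplexField.Normc.eq0_normc ->.
exists lam; split => //; apply/le_anti/andP; split.
  have [y' [y'1 <- _ _]] := opnormP n_gt0 (A + lam *: B).
  rewrite mulmxDl -scalemxAl; apply: le_trans (vnormD _ _) _.
  rewrite vnormZ lam1 mul1r lerD //.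
    by have := opnorm_le A y'; rewrite y'1 mulr1.
  by have := opnorm_le B y'; rewrite y'1 mulr1.
have := opnorm_le (A + lam *: B) y; rewrite y1 mulr1; apply: le_trans.
have := CS x ((A + lam *: B) *m y); rewrite x1 mul1r; apply: le_trans.
rewrite mulmxDl -scalemxAl dotDr dotZr -!sesqE xAy -/w lamw -rmorphD /=.
by rewrite expr0n addr0 /= sqrtr_sqr ger0_norm // addr_ge0 ?opnorm_ge0.
Qed.


Lemma i_to_ii : opnorm_parallel A B -> exists x y : 'cV[C]_n, vnorm x = 1 /\ vnorm y = 1 /\
      sesq x A y = s%:C%C /\ normc (sesq x B y) = b.
Proof.
move=> [lam [lam1 Hs]].
have [y [y1 Hy _ _]] := opnormP n_gt0 (A + lam *: B).
rewrite Hs mulmxDl -scalemxAl in Hy.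
set u := A *m y in Hy; set v := lam *: (B *m y) in Hy.
have us : vnorm u <= s by have := opnorm_le A y; rewrite y1 mulr1.
have vb : vnorm v <= b.
  by rewrite /v vnormZ lam1 mul1r; have := opnorm_le B y; rewrite y1 mulr1.
have tri := vnormD u v.
have h1 : s + b <= vnorm u + vnorm v by rewrite -Hy.
have ue : vnorm u = s.
  apply/le_anti; rewrite us /= -(lerD2r b); apply: le_trans h1 _.
  by rewrite lerD2l.
have ve : vnorm v = b.
  apply/le_anti; rewrite vb /= -(lerD2l s); apply: le_trans h1 _.
  by rewrite ue lerD2l.
have h := dotDD u v; rewrite Hy ue ve in h.
have Re_e : complex.Re (dot u v) = s * b.
  move: h; rewrite sqrrD; set r := complex.Re _; move=> h.
  have : 2 * r = 2 * (s * b).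
    by apply: (@addrI _ (s ^+ 2 + b ^+ 2)); rewrite -h; ring.
  have two : (2:R) != 0 by rewrite pnatr_eq0.
  by move/(mulfI two).
have nuv : normc (dot u v) = s * b.
  apply/le_anti/andP; split; first by have := CS u v; rewrite ue ve.
  by rewrite -Re_e Re_le_normc.
have s0 := s_gt0.
have lam0 : lam != 0.
  by apply: contra_eqN lam1 => /eqP ->; rewrite ComplexField.Normc.normc0 eq_sym oner_eq0.
have Byv : B *m y = lam^-1 *: v by rewrite /v scalerA mulVf // scale1r.
exists (s^-1%:C%C *: u), y; split.
  by rewrite vnormZ normc_real ?invr_ge0 ?ltW // ue mulVf // gt_eqF.
split => //; split.
  rewrite sesqE -/u dotZl conjC_realC dot_self ue -rmorphM /=; congr (_%:C%C).
  by rewrite expr2 mulrA mulVf ?mul1r // gt_eqF.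
rewrite sesqE dotZl Byv dotZr conjC_realC !ComplexField.Normc.normcM.
rewrite ComplexField.Normc.normcV lam1 invr1 mul1r nuv normc_real ?invr_ge0 ?ltW //.
by rewrite mulrA mulVf ?mul1r // gt_eqF.
Qed.

End Main.

Section Main2.
Variable R : realType.
Local Notation C := R[i].
Local Notation normc := ComplexField.Normc.normc.
Variables (n : nat) (A B : 'M[C]_n) (HA : A != 0).
Local Notation s := (opnorm A).
Local Notation b := (opnorm B).

Lemma vnorm0 : vnorm (0 : 'cV[C]_n) = 0.
Proof. by apply: vnorm_sq_eq => //; rewrite /dot mulmx0 mxE expr0n. Qed.

Lemma ctrA_le x : vnorm (ctr A *m x) <= s * vnorm x.
Proof.
set w := ctr A *m x.
have e : ((vnorm w ^+ 2)%:C)%C = dot x (A *m w) by rewrite dotMr dot_self.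
have h : vnorm w ^+ 2 <= vnorm x * (s * vnorm w).
  have -> : vnorm w ^+ 2 = normc (dot x (A *m w)) by rewrite -e normc_real ?sqr_ge0.
  apply: le_trans (CS _ _) _; rewrite ler_wpM2l ?vnorm_ge0 //.
  exact: (opnorm_le HA).
have [w0|w0] := eqVneq (vnorm w) 0.
  by rewrite w0 mulr_ge0 ?(opnorm_ge0 HA) ?vnorm_ge0.
have wp : 0 < vnorm w by rewrite lt_def w0 vnorm_ge0.
rewrite -(ler_pM2r wp) -expr2; apply: (le_trans h).
by rewrite mulrA (mulrC (vnorm x)).
Qed.

Lemma eig_le nu : is_eigenvalue (A *m ctr A) nu -> nu <= ((s ^+ 2)%:C)%C.
Proof.
move=> [x [x0 Hx]].
have e : nu * ((vnorm x ^+ 2)%:C)%C = ((vnorm (ctr A *m x) ^+ 2)%:C)%C.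
  by rewrite -!dot_self -dotZr -Hx -mulmxA dotMr.
have xp : 0 < vnorm x.
  rewrite lt_def vnorm_ge0 andbT; apply: contra x0 => /eqP/vnorm_eq0 ->.
  by [].
have xC : ((vnorm x ^+ 2)%:C)%C != 0.
  by rewrite -(rmorph0 (real_complex R)) (inj_eq (@complexI _)) expf_eq0 /= gt_eqF.
have -> : nu = ((vnorm (ctr A *m x) ^+ 2 / vnorm x ^+ 2)%:C)%C.
  by rewrite fmorph_div /= -e mulfK.
rewrite lecR ler_pdivrMr ?exprn_gt0 // -exprMn ler_sqr ?nnegrE ?vnorm_ge0 ?mulr_ge0 ?(opnorm_ge0 HA) //.
  exact: ctrA_le. exact: vnorm_ge0.
Qed.

Lemma mu0_eig : is_eigenvalue (A *m ctr A) ((s ^+ 2)%:C)%C.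
Proof.
have [y [y1 Ays Gy _]] := opnormP (n_gt0 HA) A.
exists (A *m y); split.
  apply/eqP => x0; have := s_gt0 HA; rewrite -Ays x0 vnorm0 ltxx.
  by [].
by rewrite -!mulmxA (mulmxA (ctr A)) Gy scalemxAr.
Qed.

Lemma largest0 : is_largest_eigenvalue (A *m ctr A) ((s ^+ 2)%:C)%C.
Proof. by split; [exact: mu0_eig | exact: eig_le]. Qed.

Lemma mu_eq mu : is_largest_eigenvalue (A *m ctr A) mu -> mu = ((s ^+ 2)%:C)%C.
Proof.
move=> [Hmu Hmax]; apply/le_anti/andP; split; first exact: eig_le.
exact: Hmax mu0_eig.
Qed.

End Main2.

Section Main3.
Variable R : realType.
Local Notation C := R[i].
Local Notation normc := ComplexField.Normc.normc.
Variables (n : nat) (A B : 'M[C]_n) (HA : A != 0).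
Local Notation s := (opnorm A).
Local Notation b := (opnorm B).

Definition cond2 := exists x y : 'cV[R[i]]_n, vnorm x = 1 /\ vnorm y = 1 /\
      sesq x A y = ((opnorm A)%:C)%C /\ ComplexField.Normc.normc (sesq x B y) = opnorm B.

Definition cond3 := forall (k : nat) (U : 'M[R[i]]_(n, k)) (mu : R[i]),
      is_largest_eigenvalue (A *m ctr A) mu ->
      ctr U *m U = 1%:M ->
      (forall x : 'cV[R[i]]_n,
         A *m ctr A *m x = mu *: x <-> exists c : 'cV[R[i]]_k, x = U *m c) ->
      let V := ((opnorm A)^-1%:C)%C *: (ctr A *m U) in
      exists lam : R[i], ComplexField.Normc.normc lam = 1 /\
        numerical_range (lam *: (ctr U *m B *m V)) (- ((opnorm B)%:C)%C).

Lemma normcN1 (z : C) : normc (- z) = normc z.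
Proof. by case: z => a b0 /=; rewrite !sqrrN. Qed.

Lemma ii_to_iii : cond2 -> cond3.
Proof.
move=> [x [y [x1 [y1 [xAy xBy]]]]] k U mu Hmu HU Heig V.
have mue := mu_eq HA Hmu.
have s0 := s_gt0 HA.
have Ay : A *m y = s%:C%C *: x.
  apply: eq_case => //; first exact: ltW.
    by have := opnorm_le HA A y; rewrite y1 mulr1.
  by rewrite dotC -sesqE xAy conjC_realC.
have Ax : ctr A *m x = s%:C%C *: y.
  apply: eq_case => //; first exact: ltW.
    by have := ctrA_le HA x; rewrite x1 mulr1.
  by rewrite -dotMr -sesqE xAy.
have Mx : A *m ctr A *m x = mu *: x.
  by rewrite mue -mulmxA Ax -scalemxAr Ay scalerA -rmorphM /= expr2.
have [c xc] := (Heig x).1 Mx.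
have c1 : vnorm c = 1.
  apply: vnorm_sq_eq => //.
  have -> : dot c c = dot x x by rewrite xc dotMr mulmxA HU mul1mx.
  by rewrite dot_self x1.
have Vc : V *m c = y.
  rewrite /V -scalemxAl -mulmxA -xc Ax scalerA -rmorphM /= mulVf ?gt_eqF //.
  by rewrite scale1r.
set w := sesq x B y in xBy.
pose lam := if w == 0 then 1 else - b%:C%C / w.
have lamw : lam * w = - b%:C%C.
  rewrite /lam; case: eqP => [w0|/eqP w0]; last by rewrite divfK.
  by rewrite -xBy w0 mulr0 ComplexField.Normc.normc0 oppr0.
exists lam; split.
  rewrite /lam; case: eqP => [_|/eqP w0]; first exact: ComplexField.Normc.normc1.
  rewrite ComplexField.Normc.normcM ComplexField.Normc.normcV normcN1 xBy.
  rewrite normc_real ?(opnorm_ge0 HA) // divff // -xBy.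
  by apply: contra w0 => /eqP /ComplexField.Normc.eq0_normc ->.
exists c; split => //.
rewrite sesqE -scalemxAl dotZr -!mulmxA Vc dotMr ctrK -xc -sesqE -/w.
exact: lamw.
Qed.

Lemma iii_to_ii : cond3 -> cond2.
Proof.
move=> H3.
have [k [U [HU Heig]]] := exists_onb (A *m ctr A) ((s ^+ 2)%:C)%C.
have := H3 k U _ (largest0 HA) HU Heig; rewrite /=.
set V := _ *: _.
case=> lam [lam1 [c [c1 Hc]]].
have s0 := s_gt0 HA.
have Mx : A *m ctr A *m (U *m c) = ((s ^+ 2)%:C)%C *: (U *m c).
  by apply/(Heig _).2; exists c.
have x1 : vnorm (U *m c) = 1.
  apply: vnorm_sq_eq => //.
  by rewrite dotMr mulmxA HU mul1mx dot_self c1.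
have yE : V *m c = s^-1%:C%C *: (ctr A *m (U *m c)).
  by rewrite /V -scalemxAl mulmxA.
have Ax : vnorm (ctr A *m (U *m c)) = s.
  apply: vnorm_sq_eq; first exact: ltW.
  by rewrite -dotMr mulmxA Mx dotZr dot_self x1 expr1n mulr1.
exists (U *m c), (V *m c); split => //; split.
  by rewrite yE vnormZ Ax normc_real ?invr_ge0 ?ltW // mulVf ?gt_eqF.
split.
  rewrite sesqE yE -scalemxAr dotZr (mulmxA A) Mx dotZr dot_self x1 expr1n mulr1.
  by rewrite -rmorphM /= expr2 mulrA mulVf ?mul1r ?gt_eqF.
move: Hc; rewrite sesqE -scalemxAl dotZr -!mulmxA dotMr ctrK -sesqE.
move=> /(congr1 (@ComplexField.Normc.normc R)); rewrite ComplexField.Normc.normcM lam1 mul1r normcN1.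
by rewrite normc_real ?(opnorm_ge0 HA).
Qed.

End Main3.


Theorem proposition3p1 (R : realType) (n : nat) (A B : 'M[R[i]]_n) :
  A != 0 ->
  (opnorm_parallel A B <->
   (exists x y : 'cV[R[i]]_n, vnorm x = 1 /\ vnorm y = 1 /\
      sesq x A y = ((opnorm A)%:C)%C /\ ComplexField.Normc.normc (sesq x B y) = opnorm B)) /\
  (opnorm_parallel A B <->
   (forall (k : nat) (U : 'M[R[i]]_(n, k)) (mu : R[i]),
      is_largest_eigenvalue (A *m ctr A) mu ->
      ctr U *m U = 1%:M ->
      (forall x : 'cV[R[i]]_n,
         A *m ctr A *m x = mu *: x <-> exists c : 'cV[R[i]]_k, x = U *m c) ->
      let V := ((opnorm A)^-1%:C)%C *: (ctr A *m U) in
      exists lam : R[i], ComplexField.Normc.normc lam = 1 /\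
        numerical_range (lam *: (ctr U *m B *m V)) (- ((opnorm B)%:C)%C))).
Proof.
move=> HA.
have e12 : opnorm_parallel A B <-> cond2 A B.
  by split; [exact: i_to_ii | exact: ii_to_i].
split; first exact: e12.
split => H.
  exact: (ii_to_iii HA (e12.1 H)).
by apply/e12; exact: (iii_to_ii HA H).
Qed.
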